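(* Let $(T,\eta,\mu)$ be a monad on $\mathsf{Set}$ such that $\eta$ is a cartesian natural transformation or $\mu$ is a cartesian natural transformation. Then the commutative square $$\begin{array}{ccc} X & \xrightarrow{\ \eta_{TX}\circ\eta_X\ } & TTX \\ \| & & \downarrow{\scriptstyle \mu_X} \\ X & \xrightarrow{\ \eta_X\ } & TX \end{array}$$ (whose left vertical map is the identity of $X$) is a pullback in $\mathsf{Set}$ for every set $X$ if and only if it is a pullback for $X=1=\{\ast\}$.
   Context: A natural transformation $\alpha:F\Rightarrow G$ between functors $\mathsf{Set}\to\mathsf{Set}$ is called cartesian if for every function $f:X\to Y$ the naturality square with sides $Ff$, $\alpha_X$, $\alpha_Y$, $Gf$ is a pullback square. *)

(* Defs.v *)
(* the category Set is modelled by Rocq's Type, morphisms by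
   Rocq functions. *)

Definition is_pullback {A B C D : Type}
  (f : A -> B) (g : A -> C) (h : B -> D) (k : C -> D) : Prop :=
  (forall a, h (f a) = k (g a)) /\
  (forall (W : Type) (p : W -> B) (q : W -> C),
      (forall w, h (p w) = k (q w)) ->
      exists u : W -> A,
        (forall w, f (u w) = p w) /\ (forall w, g (u w) = q w) /\
        (forall u' : W -> A,
            (forall w, f (u' w) = p w) -> (forall w, g (u' w) = q w) ->
            forall w, u' w = u w)).

Definition cartesian (F G : Type -> Type)
  (Fm : forall X Y : Type, (X -> Y) -> F X -> F Y)
  (Gm : forall X Y : Type, (X -> Y) -> G X -> G Y)
  (alpha : forall X : Type, F X -> G X) : Prop :=
  forall (X Y : Type) (f : X -> Y),
    is_pullback (Fm X Y f) (alpha X) (alpha Y) (Gm X Y f).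

Record monad := Monad {
  T : Type -> Type;
  fmap : forall X Y : Type, (X -> Y) -> T X -> T Y;
  eta : forall X : Type, X -> T X;
  mu : forall X : Type, T (T X) -> T X;
  fmap_id : forall (X : Type) (t : T X), fmap X X (fun x => x) t = t;
  fmap_comp : forall (X Y Z : Type) (f : X -> Y) (g : Y -> Z) (t : T X),
      fmap X Z (fun x => g (f x)) t = fmap Y Z g (fmap X Y f t);
  eta_nat : forall (X Y : Type) (f : X -> Y) (x : X),
      fmap X Y f (eta X x) = eta Y (f x);
  mu_nat : forall (X Y : Type) (f : X -> Y) (t : T (T X)),
      fmap X Y f (mu X t) = mu Y (fmap (T X) (T Y) (fmap X Y f) t);
  mu_eta_l : forall (X : Type) (t : T X), mu X (eta (T X) t) = t;
  mu_eta_r : forall (X : Type) (t : T X), mu X (fmap X (T X) (eta X) t) = t;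
  mu_assoc : forall (X : Type) (t : T (T (T X))),
      mu X (mu (T X) t) = mu X (fmap (T (T X)) (T X) (mu X) t)
}.

Arguments fmap m {X Y} _ _.
Arguments eta m {X} _.
Arguments mu m {X} _.

Definition eta_cartesian (M : monad) : Prop :=
  cartesian (fun X => X) (T M) (fun X Y f => f) (fun X Y f => fmap M f)
    (fun X => @eta M X).

Definition mu_cartesian (M : monad) : Prop :=
  cartesian (fun X => T M (T M X)) (T M)
    (fun X Y f => fmap M (fmap M f)) (fun X Y f => fmap M f)
    (fun X => @mu M X).

Definition unit_square_pullback (M : monad) (X : Type) : Prop :=
  is_pullback (fun x : X => @eta M (T M X) (@eta M X x)) (fun x : X => x)
    (@mu M X) (@eta M X).

(* Main.v *)
Require Import Defs.

Lemma usp_iff (M : monad) (X : Type) :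
  unit_square_pullback M X <->
  (forall (x : X) (t : T M (T M X)), mu M t = eta M x -> t = eta M (eta M x)).
Proof.
  split.
  - intros [_ H] x t Ht.
    destruct (H unit (fun _ => t) (fun _ => x) (fun _ => Ht)) as [u [H1 [H2 _]]].
    rewrite <- (H1 tt), (H2 tt). reflexivity.
  - intros H. split.
    + intros a. apply mu_eta_l.
    + intros W p q Hpq. exists q. split; [|split].
      * intros w. symmetry. apply H. apply Hpq.
      * intros w; reflexivity.
      * intros u' _ Hu' w. apply Hu'.
Qed.

Theorem proposition2p13 (M : monad) :
  eta_cartesian M \/ mu_cartesian M ->
  ((forall X : Type, unit_square_pullback M X) <-> unit_square_pullback M unit).
Proof.
  intros Hc. split; [intros H; apply H|].
  intros H1 X. apply usp_iff. pose proof (proj1 (usp_iff M unit) H1) as H1'; clear H1; rename H1' into H1.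
  intros x t Ht.
  set (bang := fun _ : X => tt).
  assert (Ht' : mu M (fmap M (fmap M bang) t) = eta M tt).
  { rewrite <- mu_nat, Ht, eta_nat. reflexivity. }
  pose proof (H1 tt _ Ht') as E.
  destruct Hc as [He | Hm].
  - destruct (He (T M X) (T M unit) (fmap M bang)) as [_ P].
    destruct (P unit (fun _ => eta M tt) (fun _ => t) (fun _ => eq_sym E))
      as [u [U1 [U2 _]]].
    simpl in U1, U2.
    rewrite <- (U2 tt) in Ht |- *. rewrite mu_eta_l in Ht. rewrite Ht. reflexivity.
  - destruct (Hm X unit bang) as [_ P].
    assert (Q : forall w : unit,
      fmap M bang (eta M x) = fmap M bang ((fun _ : unit => eta M x) w)).
    { reflexivity. }
    destruct (P unit (fun _ => eta M (eta M tt)) (fun _ => eta M x)) as [u [U1 [U2 U3]]].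
    { intros _. simpl. rewrite mu_eta_l, eta_nat. reflexivity. }
    simpl in *.
    rewrite (U3 (fun _ => t) (fun _ => E) (fun _ => Ht) tt).
    symmetry. apply (U3 (fun _ => eta M (eta M x))) with (w := tt).
    + intros; simpl. rewrite !eta_nat. reflexivity.
    + intros; apply mu_eta_l.
Qed.
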